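(* Let $\omega_p\in(-\pi,\pi)\setminus\{0\}$ and let $f_c(z)=\frac{\alpha_cz^2+\beta_cz+1}{z^2+\beta_cz+\alpha_c}$ with real $\alpha_c,\beta_c$ such that $f_c$ is stable with a pair of non-real complex-conjugate poles (equivalently $0<\alpha_c<1$ and $\beta_c^2<4\alpha_c$). Then there exist real $\alpha_r,\beta_r$ such that $f_r(z)=\frac{\alpha_rz^2+\beta_rz+1}{z^2+\beta_rz+\alpha_r}$ is stable with two real poles (equivalently $|\alpha_r|<1$, $|\beta_r|<\alpha_r+1$, $\beta_r^2\ge4\alpha_r$), and $$\theta_{f_c}(\omega_p)=\theta_{f_r}(\omega_p)\ (\mathrm{mod}\ 2\pi)\quad\text{and}\quad\theta_{f_c}'(\omega_p)<\theta_{f_r}'(\omega_p).$$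
   Context: Stable means all poles in the open unit disk; such $f_c,f_r$ are all-pass with $|f(e^{j\omega})|=1$ for all $\omega$. $\theta_f(\omega):=\angle f(e^{j\omega})$ is a continuous choice of argument and $\theta_f'(\omega)$ its derivative with respect to $\omega$. *)

(* Defs.v *)
From Stdlib Require Import Reals.
From Coquelicot Require Import Coquelicot.
Open Scope R_scope.

Definition allpass2 (alpha beta : R) (z : C) : C :=
  ((RtoC alpha * z * z + RtoC beta * z + 1) / (z * z + RtoC beta * z + RtoC alpha))%C.

Definition den2 (alpha beta : R) (z : C) : C :=
  (z * z + RtoC beta * z + RtoC alpha)%C.

Definition stable2 (alpha beta : R) : Prop :=
  forall z : C, den2 alpha beta z = 0%C -> Cmod z < 1.

Definition nonreal_poles (alpha beta : R) : Prop :=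
  exists z : C, den2 alpha beta z = 0%C /\ Im z <> 0.

Definition real_poles (alpha beta : R) : Prop :=
  forall z : C, den2 alpha beta z = 0%C -> Im z = 0.

Definition eiw (w : R) : C := (cos w, sin w).

Definition arg_branch (f : C -> C) (theta : R -> R) : Prop :=
  continuity theta /\
  forall w : R, f (eiw w) = (cos (theta w), sin (theta w)).

(* Main.v *)
Require Import Defs.
From Stdlib Require Import Reals ZArith Lra Psatz.
From Coquelicot Require Import Coquelicot.
Open Scope R_scope.

Lemma dmul f g x a b : derivable_pt_lim f x a -> derivable_pt_lim g x b ->
  derivable_pt_lim (fun t => f t * g t) x (a * g x + f x * b).
Proof. intros; apply (derivable_pt_lim_mult f g); auto. Qed.
Lemma dmin f g x a b : derivable_pt_lim f x a -> derivable_pt_lim g x b ->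
  derivable_pt_lim (fun t => f t - g t) x (a - b).
Proof. intros; apply (derivable_pt_lim_minus f g); auto. Qed.
Lemma dplus f g x a b : derivable_pt_lim f x a -> derivable_pt_lim g x b ->
  derivable_pt_lim (fun t => f t + g t) x (a + b).
Proof. intros; apply (derivable_pt_lim_plus f g); auto. Qed.
Lemma ddiv f g x a b : derivable_pt_lim f x a -> derivable_pt_lim g x b -> g x <> 0 ->
  derivable_pt_lim (fun t => f t / g t) x ((a * g x - f x * b) / (g x * g x)).
Proof. intros. apply is_derive_Reals. apply is_derive_Reals in H. apply is_derive_Reals in H0.
  replace (g x * g x) with (g x ^ 2) by ring. apply is_derive_div; auto. Qed.
Lemma dconst k x : derivable_pt_lim (fun _ => k) x 0.
Proof. apply (derivable_pt_lim_const k). Qed.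
Lemma dcmul k f x a : derivable_pt_lim f x a -> derivable_pt_lim (fun t => k * f t) x (k * a).
Proof. intros. replace (k*a) with (0 * f x + k * a) by ring. apply (dmul (fun _ => k) f); auto. apply dconst. Qed.

Ltac dsolve := repeat (first [eassumption | apply dconst | apply dcmul | apply dmin | apply dplus | apply dmul]).

Lemma lift_deriv (A B th : R -> R) (w0 a b : R) :
  (forall w, 0 < A w * A w + B w * B w) ->
  derivable_pt_lim A w0 a -> derivable_pt_lim B w0 b ->
  continuity_pt th w0 ->
  (forall w, cos (th w) = (A w * A w - B w * B w)/(A w * A w + B w * B w) /\
             sin (th w) = -2 * (A w * B w)/(A w * A w + B w * B w)) ->
  derivable_pt_lim th w0 (-2 * (A w0 * b - B w0 * a)/(A w0 * A w0 + B w0 * B w0)).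
Proof.
  intros HN HA HB Hc Hcs.
  set (X := fun w => (A w * A w - B w * B w)/(A w * A w + B w * B w)).
  set (Y := fun w => -2 * (A w * B w)/(A w * A w + B w * B w)).
  set (G := fun w => Y w * X w0 - X w * Y w0).
  assert (HG : exists d, derivable_pt_lim G w0 d /\ d = -2 * (A w0 * b - B w0 * a)/(A w0 * A w0 + B w0 * B w0)).
  { eexists; split.
    - unfold G. apply dmin.
      + apply (dmul Y (fun _ => X w0)); [|apply dconst].
        unfold Y. apply ddiv; [dsolve|dsolve|apply Rgt_not_eq, HN].
      + apply (dmul X (fun _ => Y w0)); [|apply dconst].
        unfold X. apply ddiv; [dsolve|dsolve|apply Rgt_not_eq, HN].
    - simpl. unfold X, Y. specialize (HN w0). field. lra. }
  destruct HG as [d [HGd Hd]]. rewrite <- Hd.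
  apply is_derive_Reals.
  apply (is_derive_ext_loc (fun w => th w0 + asin (G w))).
  - destruct (Hc 1 Rlt_0_1) as [alp [Halp Hal]].
    exists (mkposreal alp Halp). intros y Hy.
    unfold ball in Hy; simpl in Hy; unfold AbsRing_ball, abs, minus, plus, opp in Hy; simpl in Hy.
    assert (Hlt : Rabs (th y - th w0) < 1).
    { destruct (Req_dec y w0) as [->|Hne].
      - replace (th w0 - th w0) with 0 by ring. rewrite Rabs_R0. lra.
      - apply (Hal y). split. split. constructor. auto. exact Hy. }
    assert (HGs : G y = sin (th y - th w0)).
    { rewrite sin_minus. destruct (Hcs y) as [Hy1 Hy2]. destruct (Hcs w0) as [H01 H02].
      unfold G, X, Y. rewrite Hy1, Hy2, H01, H02. ring. }
    rewrite HGs. rewrite asin_sin. apply Rplus_minus.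
    pose proof PI2_1. apply Rabs_lt_between in Hlt. lra.
  - replace d with (0 + d) by ring. apply is_derive_Reals.
    apply (dplus (fun _ => th w0) (fun w => asin (G w))). apply dconst.
    replace d with (1 * d) by ring.
    apply (derivable_pt_lim_comp G asin). auto.
    assert (HG0 : G w0 = 0) by (unfold G; ring). rewrite HG0.
    assert (Hr : -1 < 0 < 1) by lra.
    apply (derive_pt_eq_1 _ _ _ (derivable_pt_asin 0 Hr)).
    rewrite derive_pt_asin. rewrite Rsqr_0, Rminus_0_r, sqrt_1. field.
Qed.

Lemma Cdiv_pair n1 n2 d1 d2 : d1*d1+d2*d2 <> 0 ->
  Cdiv (n1,n2) (d1,d2) = ((n1*d1+n2*d2)/(d1*d1+d2*d2), (n2*d1 - n1*d2)/(d1*d1+d2*d2)).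
Proof. intros H. unfold Cdiv, Cmult, Cinv; simpl. f_equal; field; nra. Qed.

Lemma allpass_eq al be w :
  0 < ((1+al)*cos w + be)*((1+al)*cos w + be) + ((1-al)*sin w)*((1-al)*sin w) ->
  allpass2 al be (eiw w) =
   (let A := (1+al)*cos w + be in let B := (1-al)*sin w in
    ((A*A - B*B)/(A*A+B*B), -2*(A*B)/(A*A+B*B))).
Proof.
  intros HN. cbv zeta.
  set (A := (1+al)*cos w + be) in *. set (B := (1-al)*sin w) in *.
  assert (Hxy : cos w * cos w + sin w * sin w = 1) by (pose proof (sin2_cos2 w); unfold Rsqr in *; lra).
  unfold allpass2, eiw.
  assert (HNum : (RtoC al * (cos w, sin w) * (cos w, sin w) + RtoC be * (cos w, sin w) + 1)%C
     = (cos w * A + sin w * B, sin w * A - cos w * B)).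
  { unfold Cmult, Cplus, RtoC; simpl. unfold A, B. f_equal.
    - assert (H1: al*(cos w * cos w + sin w * sin w) = al) by (rewrite Hxy; ring). lra.
    - ring. }
  assert (HDen : ((cos w, sin w) * (cos w, sin w) + RtoC be * (cos w, sin w) + RtoC al)%C
     = (cos w * A - sin w * B, sin w * A + cos w * B)).
  { unfold Cmult, Cplus, RtoC; simpl. unfold A, B. f_equal.
    - assert (H1: al*(cos w * cos w + sin w * sin w) = al) by (rewrite Hxy; ring). lra.
    - ring. }
  rewrite HNum, HDen.
  assert (HD : (cos w * A - sin w * B)*(cos w * A - sin w * B) + (sin w * A + cos w * B)*(sin w * A + cos w * B) = A*A+B*B).
  { transitivity ((cos w * cos w + sin w * sin w)*(A*A+B*B)); [ring| rewrite Hxy; ring]. }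
  rewrite Cdiv_pair by lra. rewrite HD. f_equal.
  - apply Rmult_eq_compat_r. transitivity ((cos w * cos w + sin w * sin w)*(A*A-B*B)); [ring| rewrite Hxy; ring].
  - unfold Rdiv. apply Rmult_eq_compat_r. transitivity ((cos w * cos w + sin w * sin w)*(-2*(A*B))); [ring| rewrite Hxy; ring].
Qed.

Lemma den2_pair al be x y : den2 al be (x,y) = (x*x - y*y + be*x + al, 2*x*y + be*y).
Proof. unfold den2, Cmult, Cplus, RtoC; simpl. f_equal; ring. Qed.

Lemma N_pos al be : al < 1 -> be < 1 + al -> -be < 1 + al -> forall w,
  0 < ((1+al)*cos w + be)*((1+al)*cos w + be) + ((1-al)*sin w)*((1-al)*sin w).
Proof.
  intros H1 H2 H3 w.
  assert (Hxy : cos w * cos w + sin w * sin w = 1) by (pose proof (sin2_cos2 w); unfold Rsqr in *; lra).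
  destruct (Req_dec (sin w) 0) as [Hs|Hs].
  - rewrite Hs in *. assert (Hc : (cos w - 1)*(cos w + 1) = 0) by lra.
    apply Rmult_integral in Hc. destruct Hc as [Hc|Hc].
    + replace (cos w) with 1 by lra. nra.
    + replace (cos w) with (-1) by lra. nra.
  - assert (0 < (1-al)*sin w*((1-al)*sin w)).
    { assert ((1-al)*sin w <> 0) by (apply Rmult_integral_contrapositive; split; lra). nra. }
    pose proof (Rle_0_sqr ((1+al)*cos w+be)); unfold Rsqr in *; lra.
Qed.

Lemma same_cs a b : cos a = cos b -> sin a = sin b -> exists k : Z, a - b = 2 * PI * IZR k.
Proof.
  intros Hc Hs.
  assert (Hcd : cos (a - b) = 1).
  { rewrite cos_minus, Hc, Hs. pose proof (sin2_cos2 b). unfold Rsqr in *; lra. }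
  assert (Hs2 : sin ((a-b)/2) = 0).
  { replace (a-b) with (2*((a-b)/2)) in Hcd by field. rewrite cos_2a_sin in Hcd. nra. }
  destruct (sin_eq_0_0 _ Hs2) as [k Hk]. exists k. lra.
Qed.

Lemma branch_deriv al be th wp : al < 1 -> be < 1 + al -> -be < 1 + al ->
  arg_branch (allpass2 al be) th ->
  let A := (1+al)*cos wp + be in let B := (1-al)*sin wp in
  cos (th wp) = (A*A - B*B)/(A*A+B*B) /\ sin (th wp) = -2*(A*B)/(A*A+B*B) /\
  derivable_pt_lim th wp (-2 * (A * ((1-al)*cos wp) - B * (-(1+al)*sin wp))/(A*A+B*B)).
Proof.
  intros H1 H2 H3 [Hcont Heq]. cbv zeta.
  assert (Hcs : forall w, cos (th w) = (((1+al)*cos w + be)*((1+al)*cos w + be) - ((1-al)*sin w)*((1-al)*sin w))/(((1+al)*cos w + be)*((1+al)*cos w + be) + ((1-al)*sin w)*((1-al)*sin w)) /\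
         sin (th w) = -2*(((1+al)*cos w + be)*((1-al)*sin w))/(((1+al)*cos w + be)*((1+al)*cos w + be) + ((1-al)*sin w)*((1-al)*sin w))).
  { intros w. pose proof (Heq w) as E. rewrite allpass_eq in E by (apply N_pos; auto).
    cbv zeta in E. injection E. intros. split; auto. }
  split; [apply Hcs|]. split; [apply Hcs|].
  apply (lift_deriv (fun w => (1+al)*cos w + be) (fun w => (1-al)*sin w)).
  - apply N_pos; auto.
  - apply is_derive_Reals. auto_derive; auto. ring.
  - apply is_derive_Reals. auto_derive; auto. ring.
  - apply Hcont.
  - apply Hcs.
Qed.

Lemma deriv_value al be c s : al < 1 -> s <> 0 -> c*c + s*s = 1 ->
  let A := (1+al)*c + be in let B := (1-al)*s in
  let K := A/(1-al) in let u := (1+al)/(1-al) in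
  -2 * (A * ((1-al)*c) - B * (-(1+al)*s))/(A*A+B*B) = -2*(u*(s*s) + K*c)/(K*K+s*s).
Proof.
  intros H1 Hs Hcs. cbv zeta.
  assert (0 < s*s) by (assert (s*s<>0) by (apply Rmult_integral_contrapositive; tauto); nra).
  assert (0 < ((1+al)*c+be)/(1-al)*(((1+al)*c+be)/(1-al)) + s*s) by (pose proof (Rle_0_sqr (((1+al)*c+be)/(1-al))); unfold Rsqr in *; lra).
  assert (Hd : ((1+al)*c + be)*((1+al)*c + be) + (1-al)*s*((1-al)*s) = (1-al)*(1-al)*(((1+al)*c+be)/(1-al)*(((1+al)*c+be)/(1-al)) + s*s)) by (field; lra).
  rewrite Hd.
  assert (Hn : ((1+al)*c + be)*((1-al)*c) - (1-al)*s*(-(1+al)*s) = (1-al)*(1-al)*((1+al)/(1-al)*(s*s) + ((1+al)*c+be)/(1-al)*c)).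
  { field. lra. }
  rewrite Hn. field. split; [lra|]. assert (0 < s*s*((1-al)*(1-al))) by (apply Rmult_lt_0_compat; nra). pose proof (Rle_0_sqr ((1+al)*c+be)); unfold Rsqr in *; lra.
Qed.

Lemma Cmod_pair_sq x y : Cmod (x,y) * Cmod (x,y) = x*x + y*y.
Proof. unfold Cmod; simpl. rewrite sqrt_sqrt. ring. nra. Qed.
Lemma Cmod_pair_ge0 x y : 0 <= Cmod (x,y).
Proof. apply Cmod_ge_0. Qed.

Lemma pos_fac t K s : t < 1 -> 0 < K*K+s*s -> (1 - t) * K * ((1 - t) * K) + (1 - t) * s * ((1 - t) * s) <> 0.
Proof. intros. apply Rgt_not_eq. replace ((1 - t) * K * ((1 - t) * K) + (1 - t) * s * ((1 - t) * s)) with ((1-t)*(1-t)*(K*K+s*s)) by ring.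
  apply Rmult_lt_0_compat; [apply Rmult_lt_0_compat|]; lra. Qed.

Lemma double_root ar br x y : ar = br*br/4 -> den2 ar br (x,y) = 0%C -> x = -br/2 /\ y = 0.
Proof.
  intros Har Hz'. rewrite den2_pair in Hz'.
  assert (Hre' : x*x - y*y + br*x + ar = 0) by (apply (f_equal fst) in Hz'; exact Hz').
  assert (Him' : 2*x*y + br*y = 0) by (apply (f_equal snd) in Hz'; exact Hz').
  assert (Hy' : y = 0).
  { destruct (Req_dec y 0) as [|Hn]; auto.
    assert ((2*x + br)*y = 0) by lra. apply Rmult_integral in H. destruct H; [|contradiction].
    assert (x = -br/2) by lra. subst x. assert (y*y = 0) by nra. nra. }
  subst y. split; auto. assert (Hx' : (x + br/2)*(x + br/2) = 0) by nra. nra.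
Qed.

Theorem lemma4 (wp alpha_c beta_c : R) :
  -PI < wp < PI -> wp <> 0 ->
  stable2 alpha_c beta_c -> nonreal_poles alpha_c beta_c ->
  exists alpha_r beta_r : R,
    stable2 alpha_r beta_r /\ real_poles alpha_r beta_r /\
    forall theta_c theta_r : R -> R,
      arg_branch (allpass2 alpha_c beta_c) theta_c ->
      arg_branch (allpass2 alpha_r beta_r) theta_r ->
      (exists k : Z, theta_c wp - theta_r wp = 2 * PI * IZR k) /\
      exists dc dr : R,
        derivable_pt_lim theta_c wp dc /\
        derivable_pt_lim theta_r wp dr /\ dc < dr.
Proof.
  intros Hw Hw0 Hst [[x y] [Hz Hy]].
  set (al := alpha_c) in *. set (be := beta_c) in *.
  rewrite den2_pair in Hz.
  assert (Hre : x*x - y*y + be*x + al = 0) by (apply (f_equal fst) in Hz; exact Hz).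
  assert (Him : 2*x*y + be*y = 0) by (apply (f_equal snd) in Hz; exact Hz).
  simpl in Hy.
  assert (Hbe : be = -2*x).
  { assert ((2*x + be)*y = 0) by lra. apply Rmult_integral in H. destruct H; [lra|contradiction]. }
  assert (Hal : al = x*x + y*y) by nra.
  assert (Hmod : x*x + y*y < 1).
  { pose proof (Hst (x,y)) as Hs. rewrite den2_pair in Hs. rewrite Hre, Him in Hs.
    specialize (Hs eq_refl). pose proof (Cmod_pair_sq x y). pose proof (Cmod_pair_ge0 x y). nra. }
  assert (Hy2 : 0 < y*y) by (assert (y*y<>0) by (apply Rmult_integral_contrapositive; tauto); nra).
  assert (Hal1 : al < 1) by lra.
  assert (Hal0 : 0 < al) by nra.
  assert (Hb1 : be < 1 + al) by nra.
  assert (Hb2 : -be < 1 + al) by nra.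
  assert (Hdisc : be*be < 4*al) by nra.
  set (c := cos wp). set (s := sin wp).
  assert (Hcs : c*c + s*s = 1) by (pose proof (sin2_cos2 wp); unfold c, s, Rsqr in *; lra).
  assert (Hs : s <> 0).
  { unfold s. destruct (Rlt_dec 0 wp).
    - apply Rgt_not_eq. apply sin_gt_0; lra.
    - apply Rlt_not_eq. assert (0 < sin (-wp)) by (apply sin_gt_0; lra). rewrite sin_neg in H. lra. }
  assert (Hs2 : 0 < s*s) by (assert (s*s<>0) by (apply Rmult_integral_contrapositive; tauto); nra).
  assert (Hcb : -1 <= c <= 1) by (apply COS_bound).
  set (K := ((1+al)*c + be)/(1-al)).
  set (uc := (1+al)/(1-al)).
  set (S := sqrt (K*K + s*s)).
  assert (HS2 : S*S = K*K+s*s) by (unfold S; apply sqrt_sqrt; nra).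
  assert (HS0 : 0 <= S) by (unfold S; apply sqrt_pos).
  set (u := (S - K*c)/(s*s)).
  assert (Hu1 : s*s*u = S - K*c) by (unfold u; field; lra).
  assert (HSK : 0 < S - K*c).
  { assert (0 < (S - K*c)*(S+K*c)) by nra.
    destruct (Rle_dec 0 (K*c)); nra. }
  assert (Hu0 : 0 < u).
  { apply Rmult_lt_reg_l with (s*s); lra. }
  assert (HSKp : 0 < S + K*c \/ S + K*c <= 0) by lra.
  assert (Hh : (K - u*c)*(K - u*c) = u*u - 1).
  { assert (Hk : u*(S+K*c) = K*K+1).
    { apply Rmult_eq_reg_l with (s*s); [|lra].
      replace (s*s*(u*(S+K*c))) with ((s*s*u)*(S+K*c)) by ring. rewrite Hu1.
      replace ((S - K*c)*(S+K*c)) with (S*S - K*K*(c*c)) by ring. rewrite HS2.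
      replace (c*c) with (1 - s*s) by lra. ring. }
    assert (u*u*(s*s) = u*(S - K*c)) by (rewrite <- Hu1; ring).
    transitivity (K*K + 1 - 2*K*c*u - u*u*(s*s) + u*u - 1); [|lra].
    replace ((K - u*c)*(K - u*c)) with (K*K - 2*K*c*u + u*u*(c*c)) by ring.
    replace (c*c) with (1 - s*s) by lra. ring. }
  assert (Hu1' : 1 <= u) by (pose proof (Rle_0_sqr (K-u*c)); unfold Rsqr in *; nra).
  assert (Hkc : K - uc*c = be/(1-al)) by (unfold K, uc; field; lra).
  assert (Hgc : (K - uc*c)*(K - uc*c) < uc*uc - 1).
  { rewrite Hkc. unfold uc.
    replace ((1 + al) / (1 - al) * ((1 + al) / (1 - al)) - 1) with (4*al/((1-al)*(1-al))) by (field; lra).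
    replace (be/(1-al)*(be/(1-al))) with (be*be/((1-al)*(1-al))) by (field; lra).
    apply Rmult_lt_compat_r; [|lra]. apply Rinv_0_lt_compat. nra. }
  assert (Hpc : 0 < uc*(s*s) + K*c).
  { replace (uc*(s*s) + K*c) with (((1+al)*(s*s+c*c) + be*c)/(1-al)) by (unfold uc, K; field; lra).
    rewrite (Rplus_comm (s*s)), Hcs. apply Rdiv_lt_0_compat; [|lra].
    destruct (Rle_dec 0 be); nra. }
  assert (Hlt : u < uc).
  { assert (Hg : forall t, (K - t*c)*(K - t*c) - (t*t - 1) = K*K + 1 - 2*K*c*t - s*s*(t*t)).
    { intros t. replace (s*s) with (1 - c*c) by lra. ring. }
    assert (E1 := Hg u). assert (E2 := Hg uc).
    assert (Hfac : (u - uc) * (2*K*c + s*s*(u+uc)) < 0).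
    { replace ((u - uc) * (2*K*c + s*s*(u+uc))) with
        ((K*K + 1 - 2*K*c*uc - s*s*(uc*uc)) - (K*K + 1 - 2*K*c*u - s*s*(u*u))) by ring.
      lra. }
    assert (0 < 2*K*c + s*s*(u+uc)) by nra.
    nra. }
  set (ar := (u-1)/(u+1)). set (br := 2*(K - u*c)/(u+1)).
  assert (Har : ar = br*br/4). { unfold ar, br. replace (2*(K-u*c)/(u+1)*(2*(K-u*c)/(u+1))) with (4*((K-u*c)*(K-u*c))/((u+1)*(u+1))) by (field; lra). rewrite Hh. field. lra. }
  assert (Hbr2 : br*br < 4).
  { unfold br. replace (2*(K-u*c)/(u+1)*(2*(K-u*c)/(u+1))) with (4*((K-u*c)*(K-u*c))/((u+1)*(u+1))) by (field; lra).
    rewrite Hh. assert (0 < (u+1)*(u+1)) by (apply Rmult_lt_0_compat; lra).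
    apply Rmult_lt_reg_r with ((u+1)*(u+1)); [lra|].
    unfold Rdiv. rewrite Rmult_assoc, Rinv_l by lra. lra. }
  assert (Har1 : ar < 1) by (rewrite Har; lra).
  assert (Hbr_1 : br < 1 + ar).
  { unfold ar, br. replace (1 + (u-1)/(u+1)) with (2*u/(u+1)) by (field; lra).
    apply Rmult_lt_compat_r; [apply Rinv_0_lt_compat; lra|]. clear - Hh Hu0; nra. }
  assert (Hbr_2 : -br < 1 + ar).
  { unfold ar, br. replace (1 + (u-1)/(u+1)) with (2*u/(u+1)) by (field; lra).
    replace (- (2 * (K - u * c) / (u + 1))) with (2*(u*c-K)/(u+1)) by (field; lra).
    apply Rmult_lt_compat_r; [apply Rinv_0_lt_compat; lra|]. clear - Hh Hu0; nra. }
  assert (HKr : ((1+ar)*c + br)/(1-ar) = K) by (unfold ar, br; field; lra).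
  assert (Hur : (1+ar)/(1-ar) = u) by (unfold ar; field; lra).
  exists ar, br. split; [|split].
  -
    intros [x' y'] Hz'. destruct (double_root ar br x' y' Har Hz') as [-> ->].
    pose proof (Cmod_pair_sq (-br/2) 0). pose proof (Cmod_pair_ge0 (-br/2) 0).
    clear - H H0 Hbr2. nra.
  -
    intros [x' y'] Hz'. destruct (double_root ar br x' y' Har Hz') as [-> ->]. reflexivity.
  - intros thc thr Hbc Hbr.
    destruct (branch_deriv al be thc wp Hal1 Hb1 Hb2 Hbc) as [Hc1 [Hc2 Hdc]].
    destruct (branch_deriv ar br thr wp Har1 Hbr_1 Hbr_2 Hbr) as [Hr1 [Hr2 Hdr]].
    fold c s in Hc1, Hc2, Hdc, Hr1, Hr2, Hdr.
    assert (HAc : (1+al)*c + be = (1-al)*K) by (unfold K; field; lra).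
    assert (HAr : (1+ar)*c + br = (1-ar)*K) by (rewrite <- HKr; field; lra).
    assert (HKs : 0 < K*K + s*s) by (pose proof (Rle_0_sqr K); unfold Rsqr in *; lra).
    split.
    + apply same_cs.
      * rewrite Hc1, Hr1, HAc, HAr. field. split; apply pos_fac; auto.
      * rewrite Hc2, Hr2, HAc, HAr. field. split; apply pos_fac; auto.
    + eexists; eexists; split; [exact Hdc|]; split; [exact Hdr|].
      rewrite (deriv_value al be c s Hal1 Hs Hcs).
      rewrite (deriv_value ar br c s Har1 Hs Hcs).
      cbv zeta. fold K uc. rewrite HKr, Hur.
      apply Rmult_lt_compat_r; [apply Rinv_0_lt_compat; lra|]. clear - Hlt Hs2; nra.
Qed.
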